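(* Let $p_1,p_3,\beta,q_0,q_1\in\mathbb{R}$ with either $p_3=0$ or $\beta=1$, and let $q_2=5(q_1-3q_0)$. Then there is a polynomial $F$ in $u,u_x,\dots,u_{4x}$ such that for every smooth solution $u(x,t)$ of $$u_t=p_1(u^2)_x+p_3(uu_{xx}+\beta u_x^2)_x+q_0uu_{5x}+q_1u_xu_{4x}+q_2u_{2x}u_{3x}$$ one has $\partial_t(u^3)=\partial_x\big(F(u,u_x,\dots,u_{4x})\big)$. Consequently, for solutions decaying rapidly at $x\to\pm\infty$ together with their derivatives, $\int_{-\infty}^{\infty}u^3\,dx$ is independent of $t$.
   Context: Subscripts denote partial derivatives, $u_{kx}=\partial_x^k u$. *)

(* Defs.v *)
From Stdlib Require Import Reals.
Open Scope R_scope.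

(* Variable i is interpreted as env i; in the theorem env i = u_{ix}
   for i = 0..4 (and 0 for i >= 5, so F is a polynomial in u,...,u_{4x}). *)
Inductive mpoly : Type :=
| PConst : R -> mpoly
| PVar : nat -> mpoly
| PAdd : mpoly -> mpoly -> mpoly
| PMul : mpoly -> mpoly -> mpoly.

Fixpoint peval (env : nat -> R) (p : mpoly) : R :=
  match p with
  | PConst c => c
  | PVar i => env i
  | PAdd p q => peval env p + peval env q
  | PMul p q => peval env p * peval env q
  end.

(* environment (u, u_x, u_2x, u_3x, u_4x) *)
Definition env5 (a0 a1 a2 a3 a4 : R) (i : nat) : R :=
  match i with
  | O => a0 | 1%nat => a1 | 2%nat => a2 | 3%nat => a3 | 4%nat => a4 | _ => 0
  end.

Definition is_dx (f g : R -> R -> R) : Prop :=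
  forall x t, derivable_pt_lim (fun y => f y t) x (g x t).
Definition is_dt (f g : R -> R -> R) : Prop :=
  forall x t, derivable_pt_lim (fun s => f x s) t (g x t).

Definition cont2 (f : R -> R -> R) : Prop :=
  forall x t eps, 0 < eps -> exists delta, 0 < delta /\
    forall x' t', Rabs (x' - x) < delta -> Rabs (t' - t) < delta ->
      Rabs (f x' t' - f x t) < eps.

Fixpoint Ck (n : nat) (f : R -> R -> R) : Prop :=
  match n with
  | O => cont2 f
  | S m => cont2 f /\ exists fx ft, is_dx f fx /\ is_dt f ft /\ Ck m fx /\ Ck m ft
  end.

Definition smooth2 (f : R -> R -> R) : Prop := forall n, Ck n f.

Definition rapid_decay (f : R -> R -> R) : Prop :=
  forall (N : nat) T eps, 0 < eps -> exists M, forall x t,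
    Rabs t <= T -> M <= Rabs x -> Rabs (x ^ N * f x t) < eps.

Definition improper_int (f : R -> R) (l : R) : Prop :=
  forall eps, 0 < eps -> exists M, forall a b, a <= - M -> M <= b ->
    exists pr : Riemann_integrable f a b, Rabs (RiemannInt pr - l) < eps.

(* right-hand side of the PDE, with (u^2)_x and (u u_xx + beta u_x^2)_x expanded *)
Definition pde_rhs (p1 p3 beta q0 q1 q2 u0 u1 u2 u3 u4 u5 : R) : R :=
  p1 * (2 * u0 * u1)
  + p3 * (u1 * u2 + u0 * u3 + beta * (2 * u1 * u2))
  + q0 * u0 * u5 + q1 * u1 * u4 + q2 * u2 * u3.

Definition is_solution (p1 p3 beta q0 q1 q2 : R)
  (u u1 u2 u3 u4 u5 ut : R -> R -> R) : Prop :=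
  smooth2 u /\
  is_dx u u1 /\ is_dx u1 u2 /\ is_dx u2 u3 /\ is_dx u3 u4 /\ is_dx u4 u5 /\
  is_dt u ut /\
  forall x t, ut x t = pde_rhs p1 p3 beta q0 q1 q2
                (u x t) (u1 x t) (u2 x t) (u3 x t) (u4 x t) (u5 x t).

(* Main.v *)
Require Import Defs.
From Stdlib Require Import Reals Lra Lia.
From Coquelicot Require Import Coquelicot.
Open Scope R_scope.

Fixpoint pder (e de : nat -> R) (p : mpoly) : R :=
  match p with
  | PConst _ => 0
  | PVar i => de i
  | PAdd p q => pder e de p + pder e de q
  | PMul p q => pder e de p * peval e q + peval e p * pder e de q
  end.

Lemma peval_der (E : R -> nat -> R) (dE : nat -> R) x :
  (forall i, derivable_pt_lim (fun y => E y i) x (dE i)) ->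
  forall p, derivable_pt_lim (fun y => peval (E y) p) x (pder (E x) dE p).
Proof.
  intros H p; induction p as [c|i|p1 IH1 p2 IH2|p1 IH1 p2 IH2]; simpl.
  - apply derivable_pt_lim_const.
  - apply H.
  - exact (derivable_pt_lim_plus _ _ x _ _ IH1 IH2).
  - exact (derivable_pt_lim_mult _ _ x _ _ IH1 IH2).
Qed.

Definition c3 := PConst 3.
Definition V i := PVar i.
Notation "a ** b" := (PMul a b) (at level 40, left associativity).
Notation "a ++ b" := (PAdd a b).

Definition Pp := V 0 ** V 0 ** V 1 ** V 3 ++ PConst (-2) ** V 0 ** V 1 ** V 1 ** V 2
  ++ PConst (1/2) ** V 1 ** V 1 ** V 1 ** V 1 ++ PConst (-1/2) ** V 0 ** V 0 ** V 2 ** V 2.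

Definition Fp (p1 p3 q0 q1 q2 : R) : mpoly :=
  PConst (3/2 * p1) ** V 0 ** V 0 ** V 0 ** V 0
  ++ PConst (3 * p3) ** V 0 ** V 0 ** V 0 ** V 2
  ++ PConst (3 * q0) ** V 0 ** V 0 ** V 0 ** V 4
  ++ PConst (3 * (q1 - 3 * q0)) ** Pp
  ++ PConst (3 / 2 * q2) ** V 0 ** V 0 ** V 2 ** V 2.

Lemma part1 (p1 p3 beta q0 q1 q2 : R)
  (hcase : p3 = 0 \/ beta = 1) (hq2 : q2 = 5 * (q1 - 3 * q0))
  u u1 u2 u3 u4 u5 ut :
  is_solution p1 p3 beta q0 q1 q2 u u1 u2 u3 u4 u5 ut ->
  forall x t,
  derivable_pt_lim
    (fun y => peval (env5 (u y t) (u1 y t) (u2 y t) (u3 y t) (u4 y t)) (Fp p1 p3 q0 q1 q2)) x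
    (3 * u x t ^ 2 * ut x t).
Proof.
  intros [_ [d1 [d2 [d3 [d4 [d5 [dt E]]]]]]] x t.
  set (F := Fp p1 p3 q0 q1 q2).
  assert (H := peval_der (fun y => env5 (u y t) (u1 y t) (u2 y t) (u3 y t) (u4 y t))
     (env5 (u1 x t) (u2 x t) (u3 x t) (u4 x t) (u5 x t)) x).
  assert (Hd : forall i, derivable_pt_lim
     (fun y => env5 (u y t) (u1 y t) (u2 y t) (u3 y t) (u4 y t) i) x
     (env5 (u1 x t) (u2 x t) (u3 x t) (u4 x t) (u5 x t) i)).
  { intros [|[|[|[|[|i]]]]]; simpl; auto. apply derivable_pt_lim_const. }
  specialize (H Hd F).
  match goal with |- derivable_pt_lim _ _ ?l => replace l with
    (pder (env5 (u x t) (u1 x t) (u2 x t) (u3 x t) (u4 x t))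
        (env5 (u1 x t) (u2 x t) (u3 x t) (u4 x t) (u5 x t)) F) end.
  exact H.
  rewrite E; unfold F, Fp, Pp, V, pde_rhs; simpl. subst q2.
  destruct hcase as [-> | ->]; field.
Qed.
Lemma mul_close (p q p0 q0 eps : R) : 0 < eps ->
  Rabs (p - p0) < Rmin 1 (eps / (2 * (Rabs q0 + 1))) ->
  Rabs (q - q0) < eps / (2 * (Rabs p0 + 1)) ->
  Rabs (p * q - p0 * q0) < eps.
Proof.
  intros he hp hq.
  assert (A : 0 < Rabs q0 + 1) by (generalize (Rabs_pos q0); lra).
  assert (B : 0 < Rabs p0 + 1) by (generalize (Rabs_pos p0); lra).
  assert (hp1 : Rabs (p - p0) < 1) by (eapply Rlt_le_trans; [exact hp| apply Rmin_l]).
  assert (hp2 : Rabs (p - p0) < eps / (2 * (Rabs q0 + 1))) by (eapply Rlt_le_trans; [exact hp| apply Rmin_r]).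
  replace (p * q - p0 * q0) with (p * (q - q0) + q0 * (p - p0)) by ring.
  eapply Rle_lt_trans; [apply Rabs_triang|]. rewrite !Rabs_mult.
  assert (Hp : Rabs p <= Rabs p0 + 1).
  { replace p with (p0 + (p - p0)) by ring. generalize (Rabs_triang p0 (p - p0)); lra. }
  assert (E1 : Rabs p * Rabs (q - q0) <= (Rabs p0 + 1) * Rabs (q - q0)).
  { apply Rmult_le_compat_r; [apply Rabs_pos| lra]. }
  assert (E1' : (Rabs p0 + 1) * Rabs (q - q0) < (Rabs p0 + 1) * (eps / (2 * (Rabs p0 + 1)))).
  { apply Rmult_lt_compat_l; lra. }
  assert (E2 : Rabs q0 * Rabs (p - p0) <= (Rabs q0 + 1) * (eps / (2 * (Rabs q0 + 1)))).
  { apply Rmult_le_compat; try apply Rabs_pos; lra. }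
  replace ((Rabs p0 + 1) * (eps / (2 * (Rabs p0 + 1)))) with (eps/2) in E1' by (field; lra).
  replace ((Rabs q0 + 1) * (eps / (2 * (Rabs q0 + 1)))) with (eps/2) in E2 by (field; lra).
  lra.
Qed.

Lemma peval_cont0 (p : mpoly) : forall eps, 0 < eps -> exists d, 0 < d /\
  forall a0 a1 a2 a3 a4, Rabs a0 < d -> Rabs a1 < d -> Rabs a2 < d -> Rabs a3 < d -> Rabs a4 < d ->
  Rabs (peval (env5 a0 a1 a2 a3 a4) p - peval (env5 0 0 0 0 0) p) < eps.
Proof.
  induction p as [c|i|p IHp q IHq|p IHp q IHq]; intros eps he; simpl.
  - exists 1; split; [lra|]. intros. rewrite Rminus_diag, Rabs_R0; lra.
  - exists eps; split; [lra|]. intros.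
    destruct i as [|[|[|[|[|i]]]]]; simpl; rewrite ?Rminus_0_r; auto.
    rewrite Rabs_R0; lra.
  - destruct (IHp (eps/2)) as [d1 [h1 H1]]; [lra|].
    destruct (IHq (eps/2)) as [d2 [h2 H2]]; [lra|].
    exists (Rmin d1 d2); split; [apply Rmin_pos; auto|]. intros.
    assert (HH : forall z, Rabs z < Rmin d1 d2 -> Rabs z < d1 /\ Rabs z < d2).
    { intros z hz. split; eapply Rlt_le_trans; eauto; [apply Rmin_l|apply Rmin_r]. }
    specialize (H1 a0 a1 a2 a3 a4). specialize (H2 a0 a1 a2 a3 a4).
    edestruct (HH a0); edestruct (HH a1); edestruct (HH a2); edestruct (HH a3); edestruct (HH a4); auto.
    replace (peval (env5 a0 a1 a2 a3 a4) p + peval (env5 a0 a1 a2 a3 a4) q -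
       (peval (env5 0 0 0 0 0) p + peval (env5 0 0 0 0 0) q)) with
      ((peval (env5 a0 a1 a2 a3 a4) p - peval (env5 0 0 0 0 0) p) +
       (peval (env5 a0 a1 a2 a3 a4) q - peval (env5 0 0 0 0 0) q)) by ring.
    eapply Rle_lt_trans; [apply Rabs_triang|].
    specialize (H1 ltac:(auto) ltac:(auto) ltac:(auto) ltac:(auto) ltac:(auto)).
    specialize (H2 ltac:(auto) ltac:(auto) ltac:(auto) ltac:(auto) ltac:(auto)). lra.
  - set (P0 := peval (env5 0 0 0 0 0) p). set (Q0 := peval (env5 0 0 0 0 0) q).
    destruct (IHp (Rmin 1 (eps / (2 * (Rabs Q0 + 1))))) as [d1 [h1 H1]].
    { apply Rmin_pos; [lra|]. apply Rdiv_lt_0_compat; [lra|]. generalize (Rabs_pos Q0); lra. }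
    destruct (IHq (eps / (2 * (Rabs P0 + 1)))) as [d2 [h2 H2]].
    { apply Rdiv_lt_0_compat; [lra|]. generalize (Rabs_pos P0); lra. }
    exists (Rmin d1 d2); split; [apply Rmin_pos; auto|]. intros.
    assert (HH : forall z, Rabs z < Rmin d1 d2 -> Rabs z < d1 /\ Rabs z < d2).
    { intros z hz. split; eapply Rlt_le_trans; eauto; [apply Rmin_l|apply Rmin_r]. }
    specialize (H1 a0 a1 a2 a3 a4). specialize (H2 a0 a1 a2 a3 a4).
    edestruct (HH a0); edestruct (HH a1); edestruct (HH a2); edestruct (HH a3); edestruct (HH a4); auto.
    apply mul_close; auto.
Qed.
Lemma inv_sq_int e p q : p <= q -> (0 < p \/ q < 0) ->
  is_RInt (fun x => e / x ^ 2) p q (e / p - e / q).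
Proof.
  intros hpq hs.
  assert (nz : forall x, Rmin p q <= x <= Rmax p q -> x <> 0).
  { rewrite Rmin_left, Rmax_right by lra. intros x hx; lra. }
  replace (e / p - e / q) with (minus ((fun x => - e / x) q) ((fun x => - e / x) p)).
  2:{ unfold minus, plus, opp; simpl. destruct hs; field; lra. }
  apply (is_RInt_derive (fun x => - e / x) (fun x => e / x ^ 2)).
  - intros x hx. specialize (nz x hx). auto_derive; auto. field; auto.
  - intros x hx. specialize (nz x hx). apply (ex_derive_continuous (fun x => e / x ^ 2)). auto_derive. auto.
Qed.

Lemma tail_bound (h : R -> R) p q e : 0 <= e -> p <= q -> (1 <= p \/ q <= -1) ->
  ex_RInt h p q -> (forall x, p <= x <= q -> Rabs (h x) <= e / x ^ 2) ->
  Rabs (RInt h p q) <= e.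
Proof.
  intros he hpq hs hi hb.
  assert (Hg := inv_sq_int e p q hpq ltac:(lra)).
  assert (Hg' := is_RInt_opp _ _ _ _ Hg).
  assert (U1 : RInt h p q <= e / p - e / q).
  { rewrite <- (is_RInt_unique _ _ _ _ Hg). apply RInt_le; auto. eexists; eauto.
    intros x hx. specialize (hb x ltac:(lra)). apply Rabs_le_between in hb. lra. }
  assert (U2 : - (e / p - e / q) <= RInt h p q).
  { assert (E' : RInt (fun x => opp (e / x ^ 2)) p q = - (e/p - e/q)) by (exact (is_RInt_unique _ _ _ _ Hg')).
    rewrite <- E'. apply RInt_le; auto. exact (ex_intro _ _ Hg').
    intros x hx. specialize (hb x ltac:(lra)). apply Rabs_le_between in hb.
    unfold opp; simpl in *. lra. }
  assert (B : 0 <= e / p - e / q <= e).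
  { unfold Rdiv. destruct hs.
    - assert (/ q <= / p) by (apply Rinv_le_contravar; lra).
      assert (0 < / q) by (apply Rinv_0_lt_compat; lra).
      assert (/ p <= 1) by (replace 1 with (/1) by lra; apply Rinv_le_contravar; lra).
      split; nra.
    - assert (/ q <= / p).
      { assert (/ (- p) <= / (- q)) by (apply Rinv_le_contravar; lra).
        rewrite !Rinv_opp in H0. lra. }
      assert (/ p < 0) by (apply Rinv_lt_0_compat; lra).
      assert (- / q <= 1).
      { rewrite <- Rinv_opp. replace 1 with (/1) by lra. apply Rinv_le_contravar; lra. }
      split; nra. }
  apply Rabs_le; lra.
Qed.
Lemma cont2_x f : cont2 f -> forall x t, continuous (fun y => f y t) x.
Proof.
  intros H x t. apply continuity_pt_filterlim. intros eps he.
  destruct (H x t eps he) as [d [hd Hd]]. exists d; split; auto.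
  intros y [_ hy]. simpl in *. unfold R_dist in *. apply Hd; auto.
  rewrite Rminus_diag, Rabs_R0; auto.
Qed.

Lemma cont2_const c : cont2 (fun _ _ => c).
Proof. intros x t eps he. exists 1; split; [lra|]. intros. rewrite Rminus_diag, Rabs_R0; auto. Qed.

Lemma cont2_mul f g : cont2 f -> cont2 g -> cont2 (fun x t => f x t * g x t).
Proof.
  intros Hf Hg x t eps he.
  destruct (Hf x t (Rmin 1 (eps / (2 * (Rabs (g x t) + 1))))) as [d1 [h1 H1]].
  { apply Rmin_pos; [lra|]. apply Rdiv_lt_0_compat; [lra|]. generalize (Rabs_pos (g x t)); lra. }
  destruct (Hg x t (eps / (2 * (Rabs (f x t) + 1)))) as [d2 [h2 H2]].
  { apply Rdiv_lt_0_compat; [lra|]. generalize (Rabs_pos (f x t)); lra. }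
  exists (Rmin d1 d2); split; [apply Rmin_pos; auto|]. intros x' t' hx ht.
  assert (HH : forall z, Rabs z < Rmin d1 d2 -> Rabs z < d1 /\ Rabs z < d2).
  { intros z hz. split; eapply Rlt_le_trans; eauto; [apply Rmin_l|apply Rmin_r]. }
  destruct (HH _ hx); destruct (HH _ ht).
  apply mul_close; auto.
Qed.

Lemma chasles h a b c : (forall a b, ex_RInt h a b) -> RInt h a c = RInt h a b + RInt h b c.
Proof. intros H. rewrite <- (RInt_Chasles h a b c); auto. Qed.

Lemma dRInt (G gg : R -> R -> R) :
  cont2 G -> cont2 gg -> (forall x s, derivable_pt_lim (fun s => G x s) s (gg x s)) ->
  forall a b s, is_derive (fun s => RInt (fun x => G x s) a b) s (RInt (fun x => gg x s) a b).
Proof.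
  intros HG Hg Hd a b s.
  assert (Der : forall x s, Derive (fun s => G x s) s = gg x s).
  { intros. apply is_derive_unique. apply is_derive_Reals. apply Hd. }
  assert (E : RInt (fun x => gg x s) a b = RInt (fun x => Derive (fun u => G x u) s) a b).
  { apply RInt_ext. intros; rewrite Der; auto. }
  rewrite E.
  apply (is_derive_RInt_param (fun s x => G x s) a b s).
  - apply filter_forall. intros s0 x _. exists (gg x s0). apply is_derive_Reals. apply Hd.
  - intros x _. intros eps. destruct (Hg x s eps (cond_pos eps)) as [d [hd Hdd]].
    exists (mkposreal d hd). intros u v hu hv. simpl in *. rewrite !Der. apply Hdd; auto.
  - apply filter_forall. intros s0. apply (ex_RInt_continuous (V:=R_CompleteNormedModule) (fun t => G t s0)). intros z _.
    apply (cont2_x G HG).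
Qed.

Lemma cons_bound (G gg Phi : R -> R -> R) :
  cont2 G -> cont2 gg -> (forall x s, derivable_pt_lim (fun s => G x s) s (gg x s)) ->
  (forall x s, derivable_pt_lim (fun y => Phi y s) x (gg x s)) ->
  forall a b t K, (forall s, Rabs s <= Rabs t -> Rabs (Phi b s - Phi a s) <= K) ->
  Rabs (RInt (fun x => G x t) a b - RInt (fun x => G x 0) a b) <= Rabs t * K.
Proof.
  intros HG Hg Hd HP a b t K HK.
  assert (Eq : forall s, RInt (fun x => gg x s) a b = Phi b s - Phi a s).
  { intros s. apply is_RInt_unique.
    apply (is_RInt_derive (fun y => Phi y s) (fun x => gg x s)).
    - intros x _. apply is_derive_Reals. apply HP.
    - intros x _. apply (cont2_x gg Hg). }
  assert (D1 : forall x, Rmin 0 t < x < Rmax 0 t ->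
     is_derive (fun s => RInt (fun x => G x s) a b) x (Phi b x - Phi a x)).
  { intros x _. rewrite <- Eq. apply dRInt; auto. }
  assert (D2 : forall x, Rmin 0 t <= x <= Rmax 0 t -> continuity_pt (fun s => RInt (fun x => G x s) a b) x).
  { intros x _. apply continuity_pt_filterlim.
    apply (ex_derive_continuous (fun s => RInt (fun x => G x s) a b)).
    eexists. apply (dRInt G gg); auto. }
  pose proof (MVT_gen (fun s => RInt (fun x => G x s) a b) 0 t (fun s => Phi b s - Phi a s) D1 D2) as M.
  destruct M as [c [hc Hc]]. simpl in Hc.
  rewrite Hc, Rminus_0_r, Rabs_mult, Rmult_comm.
    apply Rmult_le_compat_l; [apply Rabs_pos|]. apply HK.
    destruct (Rle_dec 0 t).
    + rewrite Rmin_left, Rmax_right in hc by lra. rewrite !Rabs_right; lra.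
    + rewrite Rmin_right, Rmax_left in hc by lra. rewrite (Rabs_left t) by lra.
      unfold Rabs; destruct (Rcase_abs c); lra.
Qed.
Lemma improper_limit (h : R -> R) :
  (forall a b, ex_RInt h a b) ->
  (forall e, 0 < e -> exists M, 1 <= M /\ forall x, M <= Rabs x -> Rabs (h x) <= e / x ^ 2) ->
  exists c, forall eps, 0 < eps -> exists M, 0 <= M /\
    forall a b, a <= - M -> M <= b -> Rabs (RInt h a b - c) < eps.
Proof.
  intros Hi Hd.
  assert (Tail : forall e, 0 < e -> exists M, 1 <= M /\
     (forall p q, M <= p -> p <= q -> Rabs (RInt h p q) <= e) /\
     (forall p q, p <= q -> q <= - M -> Rabs (RInt h p q) <= e)).
  { intros e he. destruct (Hd e he) as [M [hM HM]]. exists M; split; auto. split.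
    - intros p q hp hq. apply tail_bound; auto; try lra.
      intros x hx. apply HM. rewrite Rabs_right; lra.
    - intros p q hp hq. apply tail_bound; auto; try lra.
      intros x hx. apply HM. rewrite Rabs_left; lra. }
  set (s := fun n : nat => RInt h (- INR n) (INR n)).
  assert (Split : forall n m : nat, (m <= n)%nat ->
     s n - s m = RInt h (- INR n) (- INR m) + RInt h (INR m) (INR n)).
  { intros n m hnm. unfold s.
    rewrite (chasles h (- INR n) (- INR m) (INR n)) by auto.
    rewrite (chasles h (- INR m) (INR m) (INR n)) by auto. ring. }
  assert (Cs : Cauchy_crit s).
  { intros eps he. destruct (Tail (eps/3)) as [M [hM [T1 T2]]]; [lra|].
    destruct (INR_unbounded M) as [N hN]. exists N.
    assert (K : forall n m, (n >= N)%nat -> (m >= N)%nat -> (m <= n)%nat -> Rabs (s n - s m) < eps).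
    { intros n m hn hm hnm. rewrite Split by auto.
      assert (INR N <= INR m) by (apply le_INR; lia).
      assert (INR m <= INR n) by (apply le_INR; lia).
      eapply Rle_lt_trans; [apply Rabs_triang|].
      assert (Rabs (RInt h (- INR n) (- INR m)) <= eps/3) by (apply T2; lra).
      assert (Rabs (RInt h (INR m) (INR n)) <= eps/3) by (apply T1; lra). lra. }
    intros n m hn hm. unfold Rdist. destruct (Nat.le_ge_cases m n).
    - apply K; auto.
    - rewrite Rabs_minus_sym. apply K; auto. }
  destruct (Rcomplete.R_complete s Cs) as [c Hc].
  exists c. intros eps he.
  destruct (Tail (eps/3)) as [M [hM [T1 T2]]]; [lra|].
  exists M; split; [lra|]. intros a b ha hb.
  destruct (Hc (eps/3)) as [N1 HN1]; [lra|].
  destruct (INR_unbounded (Rmax (- a) b)) as [N2 hN2].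
  set (n := Nat.max N1 N2).
  assert (INR N2 <= INR n) by (apply le_INR; lia).
  assert (Rmax (-a) b >= - a /\ Rmax (-a) b >= b) by (split; [apply Rle_ge, Rmax_l| apply Rle_ge, Rmax_r]).
  assert (E : s n - RInt h a b = RInt h (- INR n) a + RInt h b (INR n)).
  { unfold s. rewrite (chasles h (- INR n) a (INR n)) by auto.
    rewrite (chasles h a b (INR n)) by auto. ring. }
  assert (Rabs (RInt h (- INR n) a) <= eps/3) by (apply T2; lra).
  assert (Rabs (RInt h b (INR n)) <= eps/3) by (apply T1; lra).
  assert (Rabs (s n - c) < eps/3) by (apply HN1; lia).
  replace (RInt h a b - c) with ((s n - c) - (s n - RInt h a b)) by ring.
  rewrite E.
  eapply Rle_lt_trans; [apply Rabs_triang|]. rewrite Rabs_Ropp.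
  eapply Rlt_le_trans with (eps/3 + 2 * (eps/3)); [|lra].
  apply Rplus_lt_le_compat; auto.
  eapply Rle_trans; [apply Rabs_triang|]. lra.
Qed.

Lemma cube_der f x l : derivable_pt_lim f x l -> derivable_pt_lim (fun y => f y ^ 3) x (3 * f x ^ 2 * l).
Proof.
  intros H.
  assert (H3 := derivable_pt_lim_mult _ _ x _ _ H (derivable_pt_lim_mult _ _ x _ _ H
     (derivable_pt_lim_mult _ _ x _ _ H (derivable_pt_lim_const 1 x)))).
  unfold mult_fct, fct_cte in H3.
  match type of H3 with derivable_pt_lim _ _ ?L => replace (3 * f x ^ 2 * l) with L by ring end.
  exact H3.
Qed.

Lemma cont2_ext f g : (forall x t, f x t = g x t) -> cont2 f -> cont2 g.
Proof. intros E H x t eps he. destruct (H x t eps he) as [d [hd Hd]]. exists d; split; auto.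
  intros. rewrite <- !E. auto. Qed.

Lemma decay0 f N T eps : rapid_decay f -> 0 < eps -> N = 0%nat -> exists M, forall x t,
    Rabs t <= T -> M <= Rabs x -> Rabs (f x t) < eps.
Proof. intros H he ->. destruct (H 0%nat T eps he) as [M HM]. exists M. intros x t h1 h2.
  specialize (HM x t h1 h2). simpl in HM. rewrite Rmult_1_l in HM. auto. Qed.

Ltac mx := first [apply Rle_refl | apply Rmax_l | eapply Rle_trans; [|apply Rmax_r]; mx].

Theorem mainTheorem10 (p1 p3 beta q0 q1 q2 : R)
  (hcase : p3 = 0 \/ beta = 1) (hq2 : q2 = 5 * (q1 - 3 * q0)) :
  exists F : mpoly,
    (forall u u1 u2 u3 u4 u5 ut : R -> R -> R,
       is_solution p1 p3 beta q0 q1 q2 u u1 u2 u3 u4 u5 ut ->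
       forall x t, exists D : R,
         derivable_pt_lim (fun s => (u x s) ^ 3) t D /\
         derivable_pt_lim
           (fun y => peval (env5 (u y t) (u1 y t) (u2 y t) (u3 y t) (u4 y t)) F) x D)
    /\
    (forall u u1 u2 u3 u4 u5 ut : R -> R -> R,
       is_solution p1 p3 beta q0 q1 q2 u u1 u2 u3 u4 u5 ut ->
       rapid_decay u -> rapid_decay u1 -> rapid_decay u2 ->
       rapid_decay u3 -> rapid_decay u4 -> rapid_decay u5 ->
       exists c : R, forall t, improper_int (fun x => (u x t) ^ 3) c).
Proof.
  exists (Fp p1 p3 q0 q1 q2). split.
  { intros u u1 u2 u3 u4 u5 ut Hs x t. exists (3 * u x t ^ 2 * ut x t). split.
    - apply cube_der. destruct Hs as [_ [_ [_ [_ [_ [_ [dt _]]]]]]]. apply dt.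
    - apply (part1 p1 p3 beta q0 q1 q2 hcase hq2 u u1 u2 u3 u4 u5 ut Hs). }
  intros u u1 u2 u3 u4 u5 ut Hs du du1 du2 du3 du4 _.
  assert (Hs' := Hs).
  destruct Hs' as [Hsm [_ [_ [_ [_ [_ [dt _]]]]]]].
  destruct (Hsm 1%nat) as [cu [fx [ft [_ [dft [_ cft]]]]]].
  assert (cut : cont2 ut).
  { apply (cont2_ext ft). intros x t. eapply uniqueness_limite; [apply dft|apply dt]. exact cft. }
  set (G := fun x s => u x s ^ 3).
  set (gg := fun x s => 3 * u x s ^ 2 * ut x s).
  set (F := Fp p1 p3 q0 q1 q2).
  set (Phi := fun y s => peval (env5 (u y s) (u1 y s) (u2 y s) (u3 y s) (u4 y s)) F).
  assert (cG : cont2 G).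
  { exact (cont2_mul _ _ cu (cont2_mul _ _ cu (cont2_mul _ _ cu (cont2_const 1)))). }
  assert (cg : cont2 gg).
  { exact (cont2_mul _ _ (cont2_mul _ _ (cont2_const 3) (cont2_mul _ _ cu (cont2_mul _ _ cu (cont2_const 1)))) cut). }
  assert (dG : forall x s, derivable_pt_lim (fun s => G x s) s (gg x s)).
  { intros x s. apply cube_der. apply dt. }
  assert (dP : forall x s, derivable_pt_lim (fun y => Phi y s) x (gg x s)).
  { intros x s. apply (part1 p1 p3 beta q0 q1 q2 hcase hq2 u u1 u2 u3 u4 u5 ut Hs). }
  assert (iG : forall t a b, ex_RInt (fun x => G x t) a b).
  { intros t a b. apply (ex_RInt_continuous (V:=R_CompleteNormedModule) (fun x => G x t)).
    intros z _. apply (cont2_x G cG). }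
  destruct (improper_limit (fun x => G x 0) (iG 0)) as [c Hc].
  { intros e he.
    destruct (decay0 u 0 0 1 du ltac:(lra) eq_refl) as [M0 HM0].
    destruct (du 2%nat 0 e he) as [M2 HM2].
    exists (Rmax 1 (Rmax M0 M2)). split; [apply Rmax_l|]. intros x hx.
    assert (h1 : 1 <= Rabs x) by (eapply Rle_trans; [apply Rmax_l|exact hx]).
    assert (h0 : M0 <= Rabs x) by (eapply Rle_trans; [eapply Rle_trans; [apply Rmax_l|apply Rmax_r]|exact hx]).
    assert (h2 : M2 <= Rabs x) by (eapply Rle_trans; [eapply Rle_trans; [apply Rmax_r|apply Rmax_r]|exact hx]).
    assert (r0 : Rabs 0 <= 0) by (rewrite Rabs_R0; lra).
    specialize (HM0 x 0 r0 h0). specialize (HM2 x 0 r0 h2).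
    rewrite Rabs_mult in HM2.
    assert (X2 : Rabs (x ^ 2) = x ^ 2) by (apply Rabs_right; apply Rle_ge, pow2_ge_0).
    rewrite X2 in HM2.
    assert (X1 : 1 <= x ^ 2).
    { rewrite <- (pow2_abs x). replace 1 with (1 ^ 2) by ring. apply pow_incr; lra. }
    unfold G. rewrite <- RPow_abs.
    set (a := Rabs (u x 0)) in *.
    assert (0 <= a) by apply Rabs_pos.
    assert (a <= e / x ^ 2).
    { unfold Rdiv. apply Rmult_le_reg_r with (x ^ 2); [lra|].
      rewrite Rmult_assoc, Rinv_l, Rmult_1_r by lra. lra. }
    assert (a ^ 3 <= a) by (simpl; nra). lra. }
  exists c. intros t eps he.
  set (K := eps / (4 * (Rabs t + 1))).
  assert (hK : 0 < K) by (unfold K; apply Rdiv_lt_0_compat; [lra|]; generalize (Rabs_pos t); lra).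
  assert (P0 : peval (env5 0 0 0 0 0) F = 0) by (unfold F, Fp, Pp, V; simpl; ring).
  destruct (peval_cont0 F K hK) as [d [hd Hd]].
  rewrite P0 in Hd.
  destruct (Hc (eps / 2)) as [M1 [hM1 HM1]]; [lra|].
  destruct (decay0 u 0 (Rabs t) d du hd eq_refl) as [N0 HN0].
  destruct (decay0 u1 0 (Rabs t) d du1 hd eq_refl) as [N1 HN1].
  destruct (decay0 u2 0 (Rabs t) d du2 hd eq_refl) as [N2 HN2].
  destruct (decay0 u3 0 (Rabs t) d du3 hd eq_refl) as [N3 HN3].
  destruct (decay0 u4 0 (Rabs t) d du4 hd eq_refl) as [N4 HN4].
  set (M := Rmax M1 (Rmax N0 (Rmax N1 (Rmax N2 (Rmax N3 N4))))).
  assert (mM1 : M1 <= M) by apply Rmax_l.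
  assert (mN : N0 <= M /\ N1 <= M /\ N2 <= M /\ N3 <= M /\ N4 <= M).
  { unfold M. repeat split; mx. }
  destruct mN as [m0 [m1 [m2 [m3 m4]]]].
  exists M. intros a b ha hb.
  assert (Hphi : forall x s, M <= Rabs x -> Rabs s <= Rabs t -> Rabs (Phi x s) < K).
  { intros x s hx hs. unfold Phi. rewrite <- (Rminus_0_r (peval _ F)).
    apply Hd; [apply HN0|apply HN1|apply HN2|apply HN3|apply HN4]; auto; lra. }
  assert (hM : 0 <= M) by lra.
  assert (Bd : forall s, Rabs s <= Rabs t -> Rabs (Phi b s - Phi a s) <= 2 * K).
  { intros s hs. 
    assert (Rabs (Phi b s) < K) by (apply Hphi; auto; rewrite Rabs_right; lra).
    assert (Rabs (Phi a s) < K) by (apply Hphi; auto; rewrite Rabs_left1; lra).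
    unfold Rminus. eapply Rle_trans; [apply Rabs_triang|]. rewrite Rabs_Ropp. lra. }
  assert (CB := cons_bound G gg Phi cG cg dG dP a b t (2 * K) Bd).
  assert (Sm : Rabs t * (2 * K) < eps / 2).
  { assert (E : Rabs t * (2 * K) = eps / 2 * (Rabs t / (Rabs t + 1))).
    { unfold K. field. generalize (Rabs_pos t); lra. }
    rewrite E. rewrite <- (Rmult_1_r (eps/2)) at 2. apply Rmult_lt_compat_l; [lra|].
    generalize (Rabs_pos t); intro.
    unfold Rdiv. apply Rmult_lt_reg_r with (Rabs t + 1); [lra|].
    rewrite Rmult_assoc, Rinv_l, Rmult_1_r by lra. lra. }
  assert (H0 := HM1 a b ltac:(lra) ltac:(lra)).
  exists (ex_RInt_Reals_0 _ _ _ (iG t a b)). rewrite <- RInt_Reals.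
  change (Rabs (RInt (fun x => G x t) a b - c) < eps).
  replace (RInt (fun x => G x t) a b - c) with
    ((RInt (fun x => G x t) a b - RInt (fun x => G x 0) a b) + (RInt (fun x => G x 0) a b - c)) by ring.
  eapply Rle_lt_trans; [apply Rabs_triang|]. lra.
Qed.
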